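(* The class of data languages accepted by SAFA is not closed under complementation: there exists a data language $L\subseteq(\Sigma\times D)^*$ accepted by some SAFA such that no SAFA accepts $(\Sigma\times D)^*\setminus L$.
   Context: $D$ is a fixed countably infinite set of data values; for a finite alphabet $\Sigma$, data words are elements of $(\Sigma\times D)^*$. A set augmented finite automaton (SAFA) is a tuple $M=(Q,\Sigma\times D,q_0,F,H,\delta)$: $Q$ finite set of states, $q_0\in Q$ initial, $F\subseteq Q$ final, $H=\{h_1,\dots,h_m\}$ a finite collection of (names of) sets of data values, $\delta\subseteq Q\times\Sigma\times C\times OP\times Q$ with $C=\{p(h_i),\,!p(h_i): h_i\in H\}$, $OP=\{-\}\cup\{\mathsf{ins}(h_i):h_i\in H\}$. Configurations are $(q,\langle S_1,\dots,S_m\rangle)$ with $S_i\subseteq D$ finite; initially state $q_0$ and all sets empty. On reading $(a,d)$, a transition $(q,a,\alpha,op,q')$ from the current state may be taken if $\alpha=p(h_i)$ and $d\in S_i$, or $\alpha=\,!p(h_i)$ and $d\notin S_i$; then the state becomes $q'$ and if $op=\mathsf{ins}(h_j)$ the value $d$ is added to $S_j$ ($op=-$ changes nothing). A word is accepted if some run reads it entirely and ends in $F$; $L(M)$ is the set of accepted words. *)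

(* Defs.v *)
From mathcomp Require Import all_boot.
Set Implicit Arguments. Unset Strict Implicit. Unset Printing Implicit Defensive.

Definition D := nat.

Definition dword (Sigma : Type) := seq (Sigma * D).

(* Conditions over H = {h_0, ..., h_(m-1)} (indexed by 'I_m):
   (true, i)  stands for p(h_i)   (d \in S_i),
   (false, i) stands for !p(h_i)  (d \notin S_i). *)
Definition cond (m : nat) := (bool * 'I_m)%type.

(* Operations: None stands for "-", Some j stands for ins(h_j). *)
Definition op (m : nat) := option 'I_m.

Record safa (Sigma : finType) := Safa {
  st : finType;
  init : st;
  final : pred st;
  nsets : nat;
  delta : pred (st * Sigma * cond nsets * op nsets * st)
}.

(* Contents of the sets S_1..S_m; they start empty and only grow by single
   insertions, hence are always finite. *)
Definition sets (m : nat) := 'I_m -> pred D.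

Definition empty_sets (m : nat) : sets m := fun _ _ => false.

Definition apply_op (m : nat) (o : op m) (d : D) (S : sets m) : sets m :=
  match o with
  | None => S
  | Some j => fun k x => if k == j then (x == d) || S k x else S k x
  end.

Definition cond_holds (m : nat) (c : cond m) (d : D) (S : sets m) : bool :=
  S c.2 d == c.1.

Fixpoint acc_from (Sigma : finType) (M : safa Sigma) (q : st M)
    (S : sets (nsets M)) (w : dword Sigma) : Prop :=
  match w with
  | [::] => @final _ M q
  | (a, d) :: w' =>
      exists (c : cond (nsets M)) (o : op (nsets M)) (q' : st M),
        [/\ @delta _ M (q, a, c, o, q'), cond_holds c d S &
            @acc_from Sigma M q' (apply_op o d S) w']
  end.

Definition accepts (Sigma : finType) (M : safa Sigma) (w : dword Sigma) : Prop :=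
  @acc_from Sigma M (@init _ M) (@empty_sets (nsets M)) w.

(* Main.v *)
Require Import Defs.
From mathcomp Require Import all_boot zify.
Set Implicit Arguments. Unset Strict Implicit.

Section Gen.
Variables (Sigma : finType) (M : safa Sigma).
Notation cfg := (st M * sets (nsets M))%type.

Definition step (c c' : cfg) (x : Sigma * D) : Prop :=
  exists (cc : cond (nsets M)) (o : op (nsets M)),
    [/\ @delta _ M (c.1, x.1, cc, o, c'.1), cond_holds cc x.2 c.2 &
        c'.2 = apply_op o x.2 c.2].

Fixpoint reach (c : cfg) (w : dword Sigma) (c' : cfg) : Prop :=
  match w with
  | [::] => c = c'
  | x :: w' => exists c1, step c c1 x /\ reach c1 w' c'
  end.

Lemma acc_step q S a d w :
  acc_from q S ((a, d) :: w) <-> exists c1, step (q, S) c1 (a, d) /\ acc_from c1.1 c1.2 w.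
Proof.
split => /=.
  move=> [cc [o [q' [H1 H2 H3]]]]; exists (q', apply_op o d S); split => //.
  by exists cc, o.
move=> [[q' S'] [[cc [o [/= H1 H2 H3]]] H4]]; exists cc, o, q'; split => //.
by rewrite -H3.
Qed.

Lemma acc_cat_inv w1 w2 q S : acc_from q S (w1 ++ w2) ->
  exists c', reach (q, S) w1 c' /\ acc_from c'.1 c'.2 w2.
Proof.
elim: w1 q S => [|[a d] w1 IH] q S /=; first by move=> H; exists (q, S).
move=> H; have /acc_step [c1 [Hs Ha]] : acc_from q S ((a, d) :: (w1 ++ w2)) by [].
have [c' [Hr Hc]] := IH _ _ Ha.
exists c'; split => //; exists c1; split => //; by case: c1 Hs Hr Ha.
Qed.

Lemma reach_acc w1 w2 c c' : reach c w1 c' -> acc_from c'.1 c'.2 w2 ->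
  acc_from c.1 c.2 (w1 ++ w2).
Proof.
elim: w1 c => [|[a d] w1 IH] [q S] /=; first by move=> <-.
move=> [c1 [Hs Hr]] Ha.
have : acc_from q S ((a, d) :: (w1 ++ w2)) by apply/acc_step; exists c1; split => //; exact: IH.
by [].
Qed.

Lemma acc_agree w (q : st M) (S S' : sets (nsets M)) :
  (forall k x, x \in map snd w -> S k x = S' k x) ->
  acc_from q S w -> acc_from q S' w.
Proof.
elim: w q S S' => [|[a d] w IH] q S S' //= Hag [cc [o [q' [H1 H2 H3]]]].
exists cc, o, q'; split => //.
  by rewrite /cond_holds -Hag // inE eqxx.
apply: IH H3 => k x Hx.
case: o {H1} => [j|] /=; last by apply: Hag; rewrite inE Hx orbT.
by case: (k == j) => //; rewrite Hag // inE Hx orbT.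
Qed.

Lemma reach_frame w c c' : reach c w c' ->
  forall k x, x \notin map snd w -> c'.2 k x = c.2 k x.
Proof.
elim: w c => [|[a d] w IH] c /=; first by move=> ->.
move=> [c1 [[cc [o [H1 H2 H3]]] Hr]] k x; rewrite inE negb_or => /andP [Hxd Hxw].
rewrite (IH _ Hr k x Hxw) H3 /=.
case: o {H1 H3} => [j|] //=; case: (k == j) => //.
by rewrite (negbTE Hxd).
Qed.

Lemma trace v q S : acc_from q S v ->
  exists f : nat -> cfg, [/\ f 0 = (q, S),
    (forall i, i <= size v -> acc_from (f i).1 (f i).2 (drop i v)) &
    (forall i j, i <= j -> j <= size v -> reach (f i) (take (j - i) (drop i v)) (f j))].
Proof.
elim: v q S => [|[a d] v IH] q S.
  move=> H; exists (fun _ => (q, S)); split => //.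
move=> /acc_step [c1 [Hs Ha]].
have [g [Hg0 Hg1 Hg2]] := IH _ _ Ha.
exists (fun i => if i is i'.+1 then g i' else (q, S)); split => //.
  case=> [|i] /= Hi; first by apply/acc_step; exists c1.
  exact: Hg1.
case=> [|i] [|j] //= Hij Hj.
  exists c1; split => //.
  have := Hg2 0 j (leq0n _) Hj; rewrite Hg0 drop0 subn0; by case: c1 {Hs Ha Hg0 Hg1 Hg2}.
by rewrite subSS; apply: Hg2.
Qed.

End Gen.

Definition h0 : 'I_2 := ord0.
Definition h1 : 'I_2 := ord_max.

Definition mdelta (t : bool * unit * cond 2 * op 2 * bool) : bool :=
  let: (q, _, c, o, q') := t in
  [|| [&& ~~ q, ~~ q' & o == Some h0],
      [&& ~~ q, q', c == (false, h0) & o == Some h1]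
    | [&& q, q', c == (false, h1) & o == None]].

Definition M0 : safa unit := @Safa unit bool false (fun q => q) 2 mdelta.

Lemma sound_true w (S : sets 2) : @acc_from _ M0 true S w ->
  forall e, S h1 e -> e \notin map snd w.
Proof.
elim: w S => [|[a d] w IH] S //= [c [o [q' [Hd Hc Hacc]]]] e He.
move: Hd => /= /and3P [Hq' /eqP Hc' /eqP Ho].
subst c o; case: q' Hq' Hacc => // _ Hacc.
rewrite inE negb_or (IH _ Hacc e He) andbT.
move: Hc; rewrite /cond_holds /=; apply: contraTneq => <-; by rewrite He.
Qed.

Lemma sound_false w (S : sets 2) : @acc_from _ M0 false S w ->
  exists x a d y, [/\ w = x ++ (a, d) :: y, d \notin map snd x, ~~ S h0 d & d \notin map snd y].
Proof.
elim: w S => [|[a d] w IH] S //= [c [o [q' [Hd Hc Hacc]]]].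
move: Hd => /= /or3P [/andP [Hq' /eqP Ho] | /and3P [Hq' /eqP Hc' /eqP Ho] | //].
  subst o; case: q' Hq' Hacc => // _ Hacc.
  have [x [a' [d' [y [-> Hx Hs Hy]]]]] := IH _ Hacc.
  exists ((a, d) :: x), a', d', y; split => //.
    rewrite /= in_cons negb_or Hx andbT; move: Hs; rewrite /apply_op /= negb_or eq_sym; by case/andP.
  by move: Hs; rewrite /apply_op /= negb_or => /andP [_ H].
subst c o; case: q' Hq' Hacc => // _ Hacc.
exists [::], a, d, w; split => //.
  by move: Hc; rewrite /cond_holds /= => /eqP ->.
apply: (sound_true Hacc); by rewrite /apply_op /= eqxx.
Qed.

Lemma complete_true w (S : sets 2) : (forall e, e \in map snd w -> ~~ S h1 e) ->
  @acc_from _ M0 true S w.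
Proof.
elim: w S => [|[a d] w IH] S //= H.
exists (false, h1), None, true; split => //.
  by rewrite /cond_holds /=; apply/eqP/negbTE; apply: H; rewrite inE eqxx.
apply: IH => e He; apply: H; by rewrite inE He orbT.
Qed.

Lemma complete_false x a d y (S : sets 2) :
  d \notin map snd x -> ~~ S h0 d -> d \notin map snd y ->
  (forall e, e \in map snd y -> ~~ S h1 e) ->
  @acc_from _ M0 false S (x ++ (a, d) :: y).
Proof.
elim: x S => [|[a' d'] x IH] S /= Hx H0 Hy H1.
  exists (false, h0), (Some h1), true; split => //.
    by rewrite /cond_holds /=; apply/eqP/negbTE.
  apply: complete_true => e He; rewrite /apply_op /=.
  rewrite negb_or H1 // andbT; apply: contraNneq Hy => <-; exact: He.
exists (S h0 d', h0), (Some h0), false; split => //.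
  by rewrite /cond_holds.
apply: IH => //.
- by move: Hx; rewrite inE negb_or => /andP [].
- move: Hx; rewrite inE negb_or => /andP [Hdd _]; rewrite /apply_op /= negb_or H0 andbT.
  by [].
Qed.

Lemma snd_u (s : seq nat) : map snd [seq ((tt : unit), i) | i <- s] = s.
Proof. by elim: s => //= ? ? ->. Qed.

Lemma not_acc_uu K : ~ accepts M0 ([seq ((tt : unit), i) | i <- iota 0 K] ++ [seq ((tt : unit), i) | i <- iota 0 K]).
Proof.
move=> /sound_false [x [a [d [y [E Hx _ Hy]]]]].
have := congr1 (fun w => count_mem d (map snd w)) E => /=.
rewrite map_cat snd_u map_cat /= !count_cat /= eqxx.
rewrite (count_uniq_mem _ (iota_uniq 0 K)).
rewrite (count_memPn Hx) (count_memPn Hy).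
by case: (d \in iota 0 K).
Qed.

Theorem lemma8 :
  exists (Sigma : finType) (M : safa Sigma),
    forall M' : safa Sigma,
      ~ (forall w : dword Sigma, accepts M' w <-> ~ accepts M w).
Proof.
exists unit, M0 => N Hiff.
set K := #|st N|.
set u : dword unit := [seq ((tt : unit), i) | i <- iota 0 K].
have HuN : accepts N (u ++ u) by apply/Hiff; exact: not_acc_uu.
have [c' [Hr0 Hc']] := acc_cat_inv HuN.
have [f [Hf0 Hf1 Hf2]] := trace Hc'.
have Hsz : size u = K by rewrite size_map size_iota.
suff main : forall a b, a < b -> b <= K -> (f a).1 = (f b).1 -> False.
  pose g (i : 'I_K.+1) := (f i).1.
  have : ~~ injectiveb g.
    apply/negP => /injectiveP /leq_card; by rewrite card_ord ltnn.
  move=> /injectivePn [i [j Hij Hg]].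
  have Hi := ltn_ord i; have Hj := ltn_ord j.
  case: (ltngtP i j) => H.
  - by apply: (main i j).
  - by apply: (main j i).
  - by move: Hij; rewrite -val_eqE /= H eqxx.
move=> a b Hab HbK Hfab.
have HbS : b <= size u by rewrite Hsz.
have HaS : a <= size u by rewrite Hsz; apply: leq_trans (ltnW Hab) HbK.
have Hr1 := Hf2 0 a (leq0n _) HaS; rewrite subn0 drop0 in Hr1.
have Hr2 := Hf2 a b (ltnW Hab) HbS.
have Hacc := Hf1 b HbS.
have Hfr := reach_frame Hr2.
have Hacc' : acc_from (f a).1 (f a).2 (drop b u).
  rewrite Hfab; apply: acc_agree Hacc => k x Hx; rewrite Hfr //.
  move: Hx; rewrite -!map_drop -map_take !snd_u !drop_iota take_iota !mem_iota.
  apply: contraTN; rewrite !add0n; lia.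
have HN := reach_acc Hr1 Hacc'; rewrite Hf0 /= in HN.
have HN' : accepts N (u ++ (take a u ++ drop b u)).
  exact: (reach_acc Hr0 HN).
move/Hiff: HN'; apply.
set rest := iota a.+1 (K - a.+1) ++ iota 0 a ++ iota b (K - b).
have -> : u ++ (take a u ++ drop b u) =
   [seq ((tt : unit), i) | i <- iota 0 a] ++ (tt, a) :: [seq ((tt : unit), i) | i <- rest].
  rewrite /u -map_take -map_drop take_iota drop_iota add0n (minn_idPl (ltnW (leq_trans Hab HbK))).
  have eK : iota 0 K = iota 0 a ++ a :: iota a.+1 (K - a.+1).
    have -> : K = a + (K - a.+1).+1 by lia.
    by rewrite iotaD /= add0n; congr (_ ++ _ :: iota _ _); lia.
  by rewrite eK /rest !map_cat /= -!catA /=.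
apply: complete_false => //.
- by rewrite snd_u mem_iota; lia.
- rewrite snd_u /rest !mem_cat !mem_iota; lia.
Qed.
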